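(* Let $\mathcal{I}$ be a $\sigma$-ideal on $\mathbb{R}$ satisfying the standing assumptions, and let $L\subseteq\mathbb{R}$ be an $\mathcal{I}$-Luzin set. Then $L+\mathbb{Q}=\{l+q: l\in L, q\in\mathbb{Q}\}$ is a strong $\mathcal{I}$-Luzin set.
   Context: Standing assumptions on $\mathcal{I}$: $\mathcal{I}$ is a $\sigma$-ideal of subsets of $\mathbb{R}$ such that $\mathbb{R}\notin\mathcal{I}$; $x+I\in\mathcal{I}$ and $xI\in\mathcal{I}$ for all $x\in\mathbb{R}$, $I\in\mathcal{I}$; every member of $\mathcal{I}$ is contained in a Borel member of $\mathcal{I}$; and for all Borel $A,B\notin\mathcal{I}$ the set $A-B$ has nonempty interior. A set $L\subseteq\mathbb{R}$ is $\mathcal{I}$-Luzin if $|L|=\mathfrak{c}$ and $L\cap I$ is countable for every $I\in\mathcal{I}$; it is strong $\mathcal{I}$-Luzin if moreover $L\cap B$ is uncountable for every Borel set $B\notin\mathcal{I}$. *)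

(* Defs.v *)
From Stdlib Require Import Reals QArith Qreals.
Open Scope R_scope.

Definition set_R := R -> Prop.

Inductive borel : set_R -> Prop :=
| borel_open : forall U, open_set U -> borel U
| borel_compl : forall A, borel A -> borel (fun x => ~ A x)
| borel_cunion : forall F : nat -> set_R,
    (forall n, borel (F n)) -> borel (fun x => exists n, F n x).

Definition countable (A : set_R) : Prop :=
  exists f : R -> nat, forall x y, A x -> A y -> f x = f y -> x = y.

Definition card_continuum (A : set_R) : Prop :=
  exists f : {x : R | A x} -> R,
    (forall u v, f u = f v -> u = v) /\ (forall y, exists u, f u = y).

Definition sigma_ideal (I : set_R -> Prop) : Prop :=
  I (fun _ => False) /\
  (forall A B : set_R, I A -> (forall x, B x -> A x) -> I B) /\
  (forall F : nat -> set_R, (forall n, I (F n)) -> I (fun x => exists n, F n x)).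

Definition translate (x : R) (A : set_R) : set_R := fun y => exists a, A a /\ y = x + a.
Definition dilate (x : R) (A : set_R) : set_R := fun y => exists a, A a /\ y = x * a.
Definition minus_set (A B : set_R) : set_R := fun y => exists a b, A a /\ B b /\ y = a - b.

Definition nonempty_interior (A : set_R) : Prop :=
  exists (x : R) (d : posreal), forall y, Rabs (y - x) < d -> A y.

Definition standing_assumptions (I : set_R -> Prop) : Prop :=
  sigma_ideal I /\
  ~ I (fun _ => True) /\
  (forall x A, I A -> I (translate x A)) /\
  (forall x A, I A -> I (dilate x A)) /\
  (forall A, I A -> exists B, borel B /\ I B /\ (forall y, A y -> B y)) /\
  (forall A B, borel A -> borel B -> ~ I A -> ~ I B -> nonempty_interior (minus_set A B)).

Definition inter (A B : set_R) : set_R := fun x => A x /\ B x.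

Definition I_Luzin (I : set_R -> Prop) (L : set_R) : Prop :=
  card_continuum L /\ (forall J, I J -> countable (inter L J)).

Definition strong_I_Luzin (I : set_R -> Prop) (L : set_R) : Prop :=
  I_Luzin I L /\ (forall B, borel B -> ~ I B -> ~ countable (inter L B)).

Definition rationals : set_R := fun r => exists q : Q, r = Q2R q.

Definition plus_Q (L : set_R) : set_R :=
  fun y => exists l q, L l /\ rationals q /\ y = l + q.

(* Main.v *)
Require Import Defs.
From Stdlib Require Import Reals QArith Qreals Lra Lia Classical ClassicalEpsilon ProofIrrelevance Cantor.
Open Scope R_scope.

Lemma countable_sub (A B : set_R) : countable A -> (forall x, B x -> A x) -> countable B.
Proof. intros [f Hf] H. exists f. intros x y Hx Hy. apply Hf; auto. Qed.

Lemma countable_union (S : nat -> set_R) :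
  (forall n, countable (S n)) -> countable (fun x => exists n, S n x).
Proof.
  intros H.
  assert (X : forall n, {f : R -> nat | forall x y, S n x -> S n y -> f x = f y -> x = y}).
  { intro n. apply constructive_indefinite_description. apply H. }
  set (f := fun n => proj1_sig (X n)).
  assert (Hf : forall n x y, S n x -> S n y -> f n x = f n y -> x = y).
  { intro n. exact (proj2_sig (X n)). }
  set (N := fun x => epsilon (inhabits 0%nat) (fun n => S n x)).
  exists (fun x => Cantor.to_nat (N x, f (N x) x)).
  intros x y Hx Hy E.
  apply (f_equal Cantor.of_nat) in E. rewrite !cancel_of_to in E.
  injection E as E1 E2.
  assert (Sx : S (N x) x) by (apply (epsilon_spec (inhabits 0%nat) (fun n => S n x)); exact Hx).
  assert (Sy : S (N y) y) by (apply (epsilon_spec (inhabits 0%nat) (fun n => S n y)); exact Hy).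
  rewrite <- E1 in Sy, E2. apply (Hf (N x)); auto.
Qed.

Definition enumQ (n : nat) : Q :=
  let (p, b) := Cantor.of_nat n in
  let (a, c) := Cantor.of_nat p in
  Qmake (Z.of_nat a - Z.of_nat c) (Pos.of_nat b).

Lemma enumQ_surj (q : Q) : exists n, enumQ n = q.
Proof.
  destruct q as [z p].
  exists (Cantor.to_nat (Cantor.to_nat (Z.to_nat z, Z.to_nat (- z)), Pos.to_nat p)).
  unfold enumQ. rewrite !cancel_of_to. rewrite Pos2Nat.id. f_equal. lia.
Qed.

Lemma Q_dense (x : R) (d : posreal) : exists q : Q, Rabs (Q2R q - x) < d.
Proof.
  destruct d as [d dpos]; simpl.
  destruct (archimed (/ d)) as [H1 H2].
  set (k := up (/ d)) in *.
  assert (Hid : 0 < / d) by (apply Rinv_0_lt_compat; lra).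
  assert (kpos : (0 < k)%Z) by (apply lt_IZR; lra).
  destruct (archimed (x * IZR k)) as [H3 H4].
  set (m := up (x * IZR k)) in *.
  exists (Qmake m (Z.to_pos k)).
  unfold Q2R; simpl. rewrite Z2Pos.id by lia.
  assert (Kp : 0 < IZR k) by lra.
  assert (dk : / IZR k < d).
  { apply (Rmult_lt_reg_l (IZR k)); auto. rewrite Rinv_r by lra.
    apply (Rmult_lt_reg_l (/ d)); auto.
    replace (/ d * (IZR k * d)) with (IZR k) by (field; lra). lra. }
  assert (E : IZR m * / IZR k - x = (IZR m - x * IZR k) * / IZR k) by (field; lra).
  rewrite E, Rabs_mult, (Rabs_right (/ IZR k)) by (apply Rle_ge, Rlt_le, Rinv_0_lt_compat; auto).
  rewrite Rabs_right by lra.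
  apply Rle_lt_trans with (1 * / IZR k); [|lra].
  apply Rmult_le_compat_r; [apply Rlt_le, Rinv_0_lt_compat; auto | lra].
Qed.

Fixpoint tear (u : nat -> R) (n : nat) : R * R :=
  match n with
  | O => (0, 1)
  | S k => let (a, b) := tear u k in
           let d := (b - a) / 3 in
           if Rle_dec (u k) (a + d) then (b - d, b) else (a, a + d)
  end.

Lemma tear_step (u : nat -> R) n :
  fst (tear u n) < snd (tear u n) ->
  fst (tear u n) <= fst (tear u (S n)) /\ snd (tear u (S n)) <= snd (tear u n) /\
  fst (tear u (S n)) < snd (tear u (S n)) /\
  (u n < fst (tear u (S n)) \/ snd (tear u (S n)) < u n).
Proof.
  simpl. destruct (tear u n) as [a b]. simpl. intro H.
  destruct (Rle_dec (u n) (a + (b - a) / 3)); simpl; lra.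
Qed.

Lemma tear_lt u n : fst (tear u n) < snd (tear u n).
Proof. induction n. simpl; lra. apply tear_step; auto. Qed.

Lemma tear_mono u n m : (n <= m)%nat ->
  fst (tear u n) <= fst (tear u m) /\ snd (tear u m) <= snd (tear u n).
Proof.
  induction 1. lra.
  destruct (tear_step u m (tear_lt u m)) as [A [B _]]. lra.
Qed.

Lemma tear_ab u n m : fst (tear u n) <= snd (tear u m).
Proof.
  destruct (tear_mono u n (max n m) ltac:(lia)).
  destruct (tear_mono u m (max n m) ltac:(lia)).
  pose proof (tear_lt u (max n m)). lra.
Qed.

Lemma R_not_inj_nat (w : R -> nat) : (forall x y, w x = w y -> x = y) -> False.
Proof.
  intros Hw.
  set (u := fun n => epsilon (inhabits 0) (fun x => w x = n)).
  assert (Hu : forall x, u (w x) = x).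
  { intro x. apply Hw. unfold u.
    apply (epsilon_spec (inhabits 0) (fun y => w y = w x)). exists x; auto. }
  set (E := fun y => exists n, y = fst (tear u n)).
  destruct (completeness E) as [l [Hub Hlub]].
  { exists 1. intros y [n ->]. pose proof (tear_ab u n 0). simpl in H. lra. }
  { exists 0. exists 0%nat. reflexivity. }
  assert (Hin : forall n, fst (tear u n) <= l <= snd (tear u n)).
  { intro n. split. apply Hub. exists n; auto.
    apply Hlub. intros y [k ->]. apply tear_ab. }
  pose proof (Hu l) as Hl.
  destruct (tear_step u (w l) (tear_lt u _)) as [_ [_ [_ H]]].
  specialize (Hin (S (w l))). rewrite Hl in H. lra.
Qed.

Lemma card_inj (L : set_R) : card_continuum L ->
  exists k : R -> R, (forall x y, k x = k y -> x = y) /\ (forall y, L (k y)).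
Proof.
  intros [f [fi fs]].
  assert (X : forall y, {u | f u = y}) by (intro y; apply constructive_indefinite_description; auto).
  exists (fun y => proj1_sig (proj1_sig (X y))). split.
  - intros x y E. destruct (X x) as [[a pa] ea]. destruct (X y) as [[b pb] eb].
    simpl in E. subst b. rewrite <- ea, <- eb. f_equal. f_equal. apply proof_irrelevance.
  - intro y. destruct (X y) as [[a pa] ea]. exact pa.
Qed.

Lemma csb (X : set_R) (h : R -> R) :
  (forall x y, h x = h y -> x = y) -> (forall x, X (h x)) -> card_continuum X.
Proof.
  intros hi hX.
  set (C := fun x => exists n z, ~ X z /\ x = Nat.iter n h z).
  set (F := fun x => if excluded_middle_informative (C x) then h x else x).
  assert (FX : forall x, X (F x)).
  { intro x. unfold F. destruct excluded_middle_informative as [c|c]; auto.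
    apply NNPP. intro nx. apply c. exists 0%nat, x. auto. }
  assert (Fi : forall x y, F x = F y -> x = y).
  { assert (K : forall x y, C x -> ~ C y -> h x <> y).
    { intros x y [n [z [nz ->]]] ny E. apply ny. exists (S n), z. split; auto. }
    intros x y. unfold F.
    destruct excluded_middle_informative as [cx|cx]; destruct excluded_middle_informative as [cy|cy]; auto.
    - intro E. exfalso. exact (K x y cx cy E).
    - intro E. exfalso. exact (K y x cy cx (eq_sym E)). }
  assert (Fs : forall y, X y -> exists x, F x = y).
  { intros y Xy. destruct (classic (C y)) as [cy|cy].
    - destruct cy as [n [z [nz ->]]]. destruct n as [|k].
      + simpl in Xy. contradiction.
      + exists (Nat.iter k h z). unfold F. destruct excluded_middle_informative as [c|c].
        * reflexivity.
        * exfalso. apply c. exists k, z. auto.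
    - exists y. unfold F. destruct excluded_middle_informative; tauto. }
  set (F' := fun x => exist X (F x) (FX x)).
  assert (G : forall u : {x | X x}, {x | F' x = u}).
  { intros [y Xy]. apply constructive_indefinite_description.
    destruct (Fs y Xy) as [x Ex]. exists x. unfold F'. subst y. f_equal. apply proof_irrelevance. }
  exists (fun u => proj1_sig (G u)). split.
  - intros u v E. destruct (G u) as [x ex]. destruct (G v) as [y ey]. simpl in E. subst. reflexivity.
  - intro y. exists (F' y). destruct (G (F' y)) as [x ex]. simpl.
    apply Fi. exact (f_equal (@proj1_sig _ _) ex).
Qed.

Lemma borel_shift A : borel A -> forall c, borel (fun x => A (x + c)).
Proof.
  induction 1; intro c.
  - apply borel_open. unfold open_set, neighbourhood, included, disc in *.
    intros x Hx. destruct (H (x + c) Hx) as [d Hd]. exists d. intros y Hy. apply Hd.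
    replace (y + c - (x + c)) with (y - x) by ring. auto.
  - exact (borel_compl _ (IHborel c)).
  - exact (borel_cunion (fun n x => F n (x + c)) (fun n => H0 n c)).
Qed.

Theorem mainTheorem2 (I : set_R -> Prop) (L : set_R) :
  standing_assumptions I -> I_Luzin I L -> strong_I_Luzin I (plus_Q L).
Proof.
  intros [SI [NT [Tr [Di [Bo Int]]]]] [cL LI].
  destruct (card_inj L cL) as [k [ki kL]].
  assert (rq : forall n, rationals (Q2R (enumQ n))) by (intro n; exists (enumQ n); auto).
  split; [split|].
  - apply (csb _ k ki). intro y. exists (k y), 0. split; [auto|split].
    + exists 0%Q. unfold Q2R; simpl; ring.
    + ring.
  - intros J HJ.
    apply countable_sub with (fun y => exists n, L (y - Q2R (enumQ n)) /\ J y).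
    + apply countable_union. intro n.
      destruct (LI _ (Tr (- Q2R (enumQ n)) J HJ)) as [g Hg].
      exists (fun y => g (y - Q2R (enumQ n))). intros x y [Lx Jx] [Ly Jy] E.
      assert (x - Q2R (enumQ n) = y - Q2R (enumQ n)); [|lra].
      apply Hg; auto; split; auto; [exists x | exists y]; split; auto; ring.
    + intros y [[l [q [Ll [[q' ->] ->]]]] Jy].
      destruct (enumQ_surj q') as [n En]. exists n. rewrite En.
      replace (l + Q2R q' - Q2R q') with l by ring. auto.
  - intros B HB NB [g Hg].
    set (D := fun x => exists n, B (x + Q2R (enumQ n))).
    assert (BD : borel D) by (apply borel_cunion; intro n; apply borel_shift; auto).
    assert (IE : I (fun x => ~ D x)).
    { apply NNPP. intro NE.
      destruct (Int _ _ (borel_compl _ BD) HB NE NB) as [x [d Hd]].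
      destruct (Q_dense x d) as [q Hq].
      destruct (Hd _ Hq) as [e [b [Ee [Bb Eq]]]].
      apply Ee. destruct (enumQ_surj (- q)) as [n En]. exists n.
      rewrite En, Q2R_opp. replace (e + - Q2R q) with b by lra. auto. }
    destruct (LI _ IE) as [g1 Hg1].
    assert (cD : countable (inter L D)).
    { apply countable_sub with (fun x => exists n, L x /\ B (x + Q2R (enumQ n))).
      - apply countable_union. intro n.
        exists (fun x => g (x + Q2R (enumQ n))). intros x y [Lx Bx] [Ly By] E.
        assert (x + Q2R (enumQ n) = y + Q2R (enumQ n)); [|lra].
        apply Hg; auto; split; auto; [exists x | exists y]; exists (Q2R (enumQ n)); auto.
      - intros x [Lx [n Bn]]. exists n. auto. }
    assert (cL' : countable L).
    { apply countable_sub with (fun x => exists n : nat,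
          match n with O => inter L (fun x => ~ D x) x | _ => inter L D x end).
      - apply countable_union. intros [|n]. exists g1; auto. exact cD.
      - intros x Lx. destruct (classic (D x)).
        + exists 1%nat. split; auto.
        + exists 0%nat. split; auto. }
    destruct cL' as [w Hw].
    apply (R_not_inj_nat (fun y => w (k y))). intros x y E. apply ki. apply Hw; auto.
Qed.
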